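(* Let $M$ be the blow-up of $\mathbb{CP}_2$ at two distinct points (so $c_1^2=7$), with Kähler cone $\mathcal K\subset H^2(M,\mathbb R)$. Let $\check{\mathcal K}=\mathcal K/\mathbb R^+$ be its quotient under positive scalar multiplication. For $t\in\mathbb R$, let $\mathbf Y_t\subset\check{\mathcal K}$ be the set of classes with $\mathcal T(\Omega)=(c_1\cdot\Omega)^2/\Omega^2\le t$; note that $\mathcal T$ is homogeneous of degree $0$ and so descends to $\check{\mathcal K}$. If $7<t<8$, then $\mathbf Y_t$ is homeomorphic to the closed unit $2$-disk; in particular, it is compact.
   Context: The Kähler cone is the set of cohomology classes of Kähler forms compatible with the complex structure. Products of classes denote the intersection pairing. *)

(* Defs.v *)
From Stdlib Require Import Reals.
Open Scope R_scope.

(* H^2(M,R) for M = Bl_2 CP^2, in the basis (H, E1, E2):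
   the triple (x0,x1,x2) denotes the class x0*H + x1*E1 + x2*E2. *)
Definition cls : Type := (R * R * R)%type.

(* Intersection pairing: H^2 = 1, E1^2 = E2^2 = -1, all other products 0. *)
Definition dot (u v : cls) : R :=
  let '(a, b, c) := u in let '(a', b', c') := v in a * a' - b * b' - c * c'.

Definition scale (l : R) (u : cls) : cls :=
  let '(a, b, c) := u in (l * a, l * b, l * c).

Definition c1 : cls := (3, -1, -1).

(* Classes of the three (-1)-curves E1, E2, H - E1 - E2. *)
Definition E1 : cls := (0, 1, 0).
Definition E2 : cls := (0, 0, 1).
Definition Lline : cls := (1, -1, -1).

(* Kähler cone of Bl_2 CP^2 (a del Pezzo surface of degree 7): the classes
   positive on the generators E1, E2, H-E1-E2 of the Mori cone. *)
Definition kahler (w : cls) : Prop :=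
  0 < dot w E1 /\ 0 < dot w E2 /\ 0 < dot w Lline.

Definition Tfun (w : cls) : R := (dot c1 w) ^ 2 / dot w w.

(* Preimage in K of Y_t: the cone of Kähler classes with T <= t. *)
Definition Ycone (t : R) (w : cls) : Prop := kahler w /\ Tfun w <= t.

Definition dist3 (u v : cls) : R :=
  let '(a, b, c) := u in let '(a', b', c') := v in
  sqrt ((a - a') ^ 2 + (b - b') ^ 2 + (c - c') ^ 2).
Definition dist2 (p q : R * R) : R :=
  let '(x, y) := p in let '(x', y') := q in sqrt ((x - x') ^ 2 + (y - y') ^ 2).

Definition disk (p : R * R) : Prop := let '(x, y) := p in x ^ 2 + y ^ 2 <= 1.

Definition cont_on3 (S : cls -> Prop) (f : cls -> R * R) : Prop :=
  forall x, S x -> forall eps, 0 < eps -> exists delta, 0 < delta /\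
    forall y, S y -> dist3 x y < delta -> dist2 (f x) (f y) < eps.
Definition cont_on2 (S : R * R -> Prop) (g : R * R -> cls) : Prop :=
  forall p, S p -> forall eps, 0 < eps -> exists delta, 0 < delta /\
    forall q, S q -> dist2 p q < delta -> dist3 (g p) (g q) < eps.

(* "C / R^+ is homeomorphic to the closed unit disk", for a cone C, phrased
   without choosing a slice: f : C -> D is continuous, its fibres are exactly
   the R^+-orbits (so it induces a continuous bijection C/R^+ -> D, by the
   universal property of the quotient topology), and there is a continuous
   g : D -> C with f o g = id (so the inverse D -> C/R^+ is pi o g, continuous).
   Conversely any homeomorphism C/R^+ ~ D gives such f, g, since C/R^+
   has the continuous section w |-> w / (H-coefficient) for the Kähler cone. *)
Definition cone_quotient_homeo_disk (C : cls -> Prop) : Prop :=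
  exists (f : cls -> R * R) (g : R * R -> cls),
    cont_on3 C f /\
    (forall x y, C x -> C y ->
       (f x = f y <-> exists l, 0 < l /\ y = scale l x)) /\
    (forall x, C x -> disk (f x)) /\
    cont_on2 disk g /\
    (forall p, disk p -> C (g p) /\ f (g p) = p).

(* Main.v *)
Require Import Defs.
From Stdlib Require Import Reals Lra Psatz.
Open Scope R_scope.

Lemma div_lt (X Y e : R) : 0 < Y -> X < e * Y -> X / Y < e.
Proof. intros HY H. apply Rmult_lt_reg_r with Y; auto.
  replace (X / Y * Y) with X by (field; lra). lra. Qed.

Lemma lt_div (X Y e : R) : 0 < Y -> e * Y < X -> e < X / Y.
Proof. intros HY H. apply Rmult_lt_reg_r with Y; auto.
  replace (X / Y * Y) with X by (field; lra). lra. Qed.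

Lemma ratio_cont (a n : R) : 0 < a -> forall e, 0 < e ->
  exists d, 0 < d /\ forall a' n', Rabs (a' - a) < d -> Rabs (n' - n) < d ->
    Rabs (n' / a' - n / a) < e.
Proof.
  intros Ha e He.
  assert (Hn : 0 <= Rabs n) by apply Rabs_pos.
  set (K := e * a * a / (4 * (a + Rabs n))).
  assert (HK : 0 < K). { unfold K. apply Rdiv_lt_0_compat; [|lra]. repeat apply Rmult_lt_0_compat; lra. }
  assert (HK2 : K * (a + Rabs n) = e * a * a / 4) by (unfold K; field; lra).
  exists (Rmin (a/2) K). split. { apply Rmin_glb_lt; lra. }
  intros a' n' Ha' Hn'.
  assert (H1 := Rmin_l (a/2) K). assert (H2 := Rmin_r (a/2) K).
  set (u := a' - a) in *. set (v := n' - n) in *.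
  apply Rabs_def2 in Ha'. apply Rabs_def2 in Hn'.
  assert (Hap : a / 2 < a') by (unfold u in *; lra).
  assert (E : n' / a' - n / a = (v * a - n * u) / (a * a')) by (unfold u, v; field; lra).
  rewrite E.
  assert (Hnu : Rabs (n * u) <= Rabs n * K).
  { rewrite Rabs_mult. apply Rmult_le_compat_l; auto.
    assert (Rabs u < Rmin (a/2) K) by (apply Rabs_def1; lra). lra. }
  assert (Hnu1 := Rle_abs (n*u)). assert (Hnu2 := Rle_abs (-(n*u))).
  rewrite Rabs_Ropp in Hnu2.
  assert (Hv1 : v * a < K * a) by (apply Rmult_lt_compat_r; lra).
  assert (Hv2 : - K * a < v * a) by (apply Rmult_lt_compat_r; lra).
  assert (Hea : e * a * a / 4 < e * (a * a')).
  { assert (0 < e * a * (a' - a/2)) by (repeat apply Rmult_lt_0_compat; lra). nra. }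
  assert (0 < a * a') by (apply Rmult_lt_0_compat; lra).
  apply Rabs_def1.
  - apply div_lt; [lra|]. nra.
  - apply lt_div; [lra|]. nra.
Qed.

Lemma sqrt2_lt u v e : Rabs u < e/2 -> Rabs v < e/2 -> sqrt (u^2+v^2) < e.
Proof.
  intros Hu Hv. assert (0 <= Rabs u) by apply Rabs_pos. assert (0 <= Rabs v) by apply Rabs_pos.
  apply Rle_lt_trans with (sqrt ((Rabs u + Rabs v)^2)).
  - apply sqrt_le_1_alt. rewrite <- (pow2_abs u), <- (pow2_abs v). nra.
  - rewrite sqrt_pow2; lra.
Qed.

Lemma sqrt3_lt u v w e : Rabs u < e/3 -> Rabs v < e/3 -> Rabs w < e/3 ->
  sqrt (u^2+v^2+w^2) < e.
Proof.
  intros Hu Hv Hw. assert (0 <= Rabs u) by apply Rabs_pos. assert (0 <= Rabs v) by apply Rabs_pos.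
  assert (0 <= Rabs w) by apply Rabs_pos.
  apply Rle_lt_trans with (sqrt ((Rabs u + Rabs v + Rabs w)^2)).
  - apply sqrt_le_1_alt. rewrite <- (pow2_abs u), <- (pow2_abs v), <- (pow2_abs w). nra.
  - rewrite sqrt_pow2; lra.
Qed.

Lemma abs_le_sqrt u z : 0 <= z -> Rabs u <= sqrt (u^2 + z).
Proof. intros Hz. rewrite <- (sqrt_pow2 (Rabs u)) by apply Rabs_pos.
  apply sqrt_le_1_alt. rewrite pow2_abs. lra. Qed.

Definition P (t x y : R) := t*(x^2+y^2) + (3-x-y)^2 - t.

Lemma P_region t x y : 7 < t < 8 -> P t x y <= 0 -> 0 < x /\ 0 < y /\ x + y < 1.
Proof.
  unfold P. intros [H1 H2] HP.
  assert (Ex : forall x y, (t+1)*(t*(x^2+y^2) + (3-x-y)^2 - t) =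
     ((t+1)*y - (3-x))^2 + t*((t+2)*x^2 - 6*x + 8 - t)) by (intros; ring).
  split; [|split].
  - destruct (Rle_or_lt x 0) as [Hx|Hx]; auto. exfalso.
    specialize (Ex x y). assert (0 < t*((t+2)*x^2 - 6*x + 8 - t)).
    { apply Rmult_lt_0_compat; [lra|]. assert (0 <= (t+2)*x^2) by (apply Rmult_le_pos; [lra|apply pow2_ge_0]). lra. }
    assert (0 <= ((t+1)*y - (3-x))^2) by apply pow2_ge_0. nra.
  - destruct (Rle_or_lt y 0) as [Hy|Hy]; auto. exfalso.
    specialize (Ex y x). assert (0 < t*((t+2)*y^2 - 6*y + 8 - t)).
    { apply Rmult_lt_0_compat; [lra|]. assert (0 <= (t+2)*y^2) by (apply Rmult_le_pos; [lra|apply pow2_ge_0]). lra. }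
    assert (0 <= ((t+1)*x - (3-y))^2) by apply pow2_ge_0.
    replace (t * (y ^ 2 + x ^ 2) + (3 - y - x) ^ 2 - t) with
      (t * (x ^ 2 + y ^ 2) + (3 - x - y) ^ 2 - t) in Ex by ring. nra.
  - destruct (Rle_or_lt 1 (x+y)) as [Hs|Hs]; auto. exfalso.
    set (s := x + y) in *. set (d := x - y).
    assert (E : 2*(t*(x^2+y^2) + (3-x-y)^2 - t) =
      (s-1)*((t+2)*(s-1) + 2*t - 8) + (8 - t) + t*d^2) by (unfold s, d; ring).
    assert (0 <= (s-1)*((t+2)*(s-1) + 2*t - 8)) by (apply Rmult_le_pos; nra).
    assert (0 <= t*d^2) by (apply Rmult_le_pos; [lra|apply pow2_ge_0]). nra.
Qed.

Definition kk t := (t+2)/2.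
Definition RR t := t*(t-7)/(t+2).
Definition s0 t := 6/(t+2).
Definition al t := sqrt (kk t / RR t).
Definition be t := sqrt (t / (2 * RR t)).
Definition fS (w : cls) : R := let '(a,b,c) := w in -(b+c)/a.
Definition fD (w : cls) : R := let '(a,b,c) := w in (c-b)/a.
Definition ff t (w : cls) : R * R := (al t * (fS w - s0 t), be t * fD w).
Definition gg t (p : R * R) : cls := let '(p1,p2) := p in
  (1, -((s0 t + p1 / al t + p2 / be t)/2), -((s0 t + p1 / al t - p2 / be t)/2)).

Lemma consts t : 7 < t < 8 ->
  0 < RR t /\ 0 < al t /\ 0 < be t /\ al t ^ 2 = kk t / RR t /\ be t ^ 2 = t / (2 * RR t).
Proof.
  intros Ht. assert (HR : 0 < RR t).
  { unfold RR. apply Rdiv_lt_0_compat; nra. }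
  assert (0 < kk t / RR t) by (unfold kk; apply Rdiv_lt_0_compat; lra).
  assert (0 < t / (2 * RR t)) by (apply Rdiv_lt_0_compat; lra).
  unfold al, be. repeat split; auto; try apply sqrt_lt_R0; auto; apply pow2_sqrt; lra.
Qed.

Lemma key t x y : 7 < t < 8 ->
  (al t * (x + y - s0 t))^2 + (be t * (x - y))^2 = P t x y / RR t + 1.
Proof.
  intros Ht. destruct (consts t Ht) as (HR & Ha & Hb & Ha2 & Hb2).
  replace ((al t * (x + y - s0 t))^2 + (be t * (x - y))^2) with
    (al t ^2 * (x + y - s0 t)^2 + be t ^2 * (x - y)^2) by ring.
  rewrite Ha2, Hb2. unfold P, kk, s0, RR in *. field. split; lra.
Qed.

Lemma div_le (X Y e : R) : 0 < Y -> X <= e * Y -> X / Y <= e.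
Proof. intros HY H. apply Rmult_le_reg_r with Y; auto.
  replace (X / Y * Y) with X by (field; lra). lra. Qed.

Lemma abs_lin A B u v d : 0 < A -> 0 < B -> Rabs u < d -> Rabs v < d ->
  Rabs (A*u + B*v) < (A+B)*d.
Proof.
  intros HA HB Hu Hv. eapply Rle_lt_trans; [apply Rabs_triang|].
  rewrite !Rabs_mult, (Rabs_pos_eq A), (Rabs_pos_eq B) by lra. nra.
Qed.

Lemma mul_np (X Y : R) : X <= 0 -> 0 < Y -> X * Y <= 0.
Proof. intros; nra. Qed.

Theorem lemma1 (t : R) (ht : 7 < t < 8) :
  cone_quotient_homeo_disk (Ycone t).
Proof.
  destruct (consts t ht) as (HR & Hal & Hbe & Hal2 & Hbe2).
  exists (ff t), (gg t).
  split; [|split; [|split; [|split]]].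
  -
    intros [[a b] c] [Hk HT] eps Heps.
    unfold kahler, dot, Defs.E1, E2, Lline in Hk. cbv beta iota in Hk.
    assert (Ha : 0 < a) by lra.
    set (e' := Rmin (eps/(2*al t)) (eps/(2*be t))).
    assert (He' : 0 < e').
    { unfold e'. apply Rmin_glb_lt; apply Rdiv_lt_0_compat; lra. }
    destruct (ratio_cont a (-(b+c)) Ha e' He') as [d1 [Hd1 HS]].
    destruct (ratio_cont a (c-b) Ha e' He') as [d2 [Hd2 HD]].
    exists (Rmin (d1/2) (d2/2)). split. { apply Rmin_glb_lt; lra. }
    intros [[a' b'] c'] _ Hd. unfold dist3 in Hd.
    assert (Hm1 := Rmin_l (d1/2) (d2/2)). assert (Hm2 := Rmin_r (d1/2) (d2/2)).
    assert (Ea : Rabs (a' - a) < Rmin (d1/2) (d2/2)).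
    { rewrite Rabs_minus_sym. eapply Rle_lt_trans; [|exact Hd].
      replace ((a - a') ^ 2 + (b - b') ^ 2 + (c - c') ^ 2) with
        ((a - a') ^ 2 + ((b - b') ^ 2 + (c - c') ^ 2)) by ring.
      apply abs_le_sqrt; repeat apply Rplus_le_le_0_compat; apply pow2_ge_0. }
    assert (Eb : Rabs (b' - b) < Rmin (d1/2) (d2/2)).
    { rewrite Rabs_minus_sym. eapply Rle_lt_trans; [|exact Hd].
      replace ((a - a') ^ 2 + (b - b') ^ 2 + (c - c') ^ 2) with
        ((b - b') ^ 2 + ((a - a') ^ 2 + (c - c') ^ 2)) by ring.
      apply abs_le_sqrt; repeat apply Rplus_le_le_0_compat; apply pow2_ge_0. }
    assert (Ec : Rabs (c' - c) < Rmin (d1/2) (d2/2)).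
    { rewrite Rabs_minus_sym. eapply Rle_lt_trans; [|exact Hd].
      replace ((a - a') ^ 2 + (b - b') ^ 2 + (c - c') ^ 2) with
        ((c - c') ^ 2 + ((a - a') ^ 2 + (b - b') ^ 2)) by ring.
      apply abs_le_sqrt; repeat apply Rplus_le_le_0_compat; apply pow2_ge_0. }
    assert (HS' : Rabs ((-(b'+c'))/a' - (-(b+c))/a) < e').
    { apply HS; [lra|].
      replace (-(b'+c') - -(b+c)) with (-((b'-b) + (c'-c))) by ring.
      rewrite Rabs_Ropp. eapply Rle_lt_trans; [apply Rabs_triang|]. lra. }
    assert (HD' : Rabs ((c'-b')/a' - (c-b)/a) < e').
    { apply HD; [lra|].
      replace ((c'-b') - (c-b)) with ((c'-c) + -(b'-b)) by ring.
      eapply Rle_lt_trans; [apply Rabs_triang|]. rewrite Rabs_Ropp. lra. }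
    unfold ff, fS, fD, dist2.
    assert (Hm3 := Rmin_l (eps/(2*al t)) (eps/(2*be t))).
    assert (Hm4 := Rmin_r (eps/(2*al t)) (eps/(2*be t))).
    fold e' in Hm3, Hm4.
    apply sqrt2_lt.
    + replace (al t * (- (b + c) / a - s0 t) - al t * (- (b' + c') / a' - s0 t)) with
        (- (al t * ((-(b'+c'))/a' - (-(b+c))/a))) by ring.
      rewrite Rabs_Ropp, Rabs_mult, (Rabs_pos_eq (al t)) by lra.
      apply Rlt_le_trans with (al t * e'); [apply Rmult_lt_compat_l; lra|].
      apply Rle_trans with (al t * (eps / (2 * al t))); [apply Rmult_le_compat_l; lra|].
      right. field. lra.
    + replace (be t * ((c - b) / a) - be t * ((c' - b') / a')) with
        (- (be t * ((c'-b')/a' - (c-b)/a))) by ring.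
      rewrite Rabs_Ropp, Rabs_mult, (Rabs_pos_eq (be t)) by lra.
      apply Rlt_le_trans with (be t * e'); [apply Rmult_lt_compat_l; lra|].
      apply Rle_trans with (be t * (eps / (2 * be t))); [apply Rmult_le_compat_l; lra|].
      right. field. lra.
  -
    intros [[a b] c] [[a' b'] c'] [Hk _] [Hk' _].
    unfold kahler, dot, Defs.E1, E2, Lline in Hk, Hk'. cbv beta iota in Hk, Hk'.
    assert (Ha : 0 < a) by lra. assert (Ha' : 0 < a') by lra.
    split.
    + intros H. unfold ff, fS, fD in H. injection H as H1 H2.
      assert (HS : -(b+c)/a = -(b'+c')/a').
      { apply Rmult_eq_reg_l in H1; lra. }
      assert (HD : (c-b)/a = (c'-b')/a').
      { apply Rmult_eq_reg_l in H2; lra. }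
      assert (E1' : (b+c)*a' = (b'+c')*a).
      { replace ((b+c)*a') with (-(-(b+c)/a) * a * a') by (field; lra).
        rewrite HS. field; lra. }
      assert (E2' : (c-b)*a' = (c'-b')*a).
      { replace ((c-b)*a') with ((c-b)/a * a * a') by (field; lra).
        rewrite HD. field; lra. }
      exists (a'/a). split; [apply Rdiv_lt_0_compat; lra|].
      unfold scale. f_equal; [f_equal|].
      * field; lra.
      * apply Rmult_eq_reg_r with a; [|lra].
        replace (a'/a*b*a) with (a'*b) by (field; lra). nra.
      * apply Rmult_eq_reg_r with a; [|lra].
        replace (a'/a*c*a) with (a'*c) by (field; lra). nra.
    + intros [l [Hl E]]. injection E as -> -> ->.
      unfold ff, fS, fD. f_equal; f_equal; [f_equal|]; field; lra.
  -
    intros [[a b] c] [Hk HT].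
    unfold kahler, dot, Defs.E1, E2, Lline in Hk. cbv beta iota in Hk.
    unfold Tfun, dot, Defs.c1 in HT. cbv beta iota in HT.
    assert (Ha : 0 < a) by lra.
    assert (HDp : 0 < a * a - b * b - c * c) by nra.
    apply Rmult_le_compat_r with (r := a * a - b * b - c * c) in HT; [|lra].
    replace ((3 * a - -1 * b - -1 * c) ^ 2 / (a * a - b * b - c * c) * (a * a - b * b - c * c))
      with ((3 * a - -1 * b - -1 * c) ^ 2) in HT by (field; lra).
    assert (HP : P t (-b/a) (-c/a) <= 0).
    { replace (P t (-b/a) (-c/a)) with
        ((t*(b^2+c^2) + (3*a+b+c)^2 - t*a^2) / a^2) by (unfold P; field; lra).
      assert (0 < / a^2) by (apply Rinv_0_lt_compat; nra).
      unfold Rdiv. apply mul_np; [|lra].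
      replace (3 * a - -1 * b - -1 * c) with (3*a+b+c) in HT by ring.
      replace (t*(b^2+c^2) + (3*a+b+c)^2 - t*a^2) with
        ((3*a+b+c)^2 - t * (a * a - b * b - c * c)) by ring. lra. }
    unfold disk, ff, fS, fD.
    replace (- (b + c) / a) with (-b/a + -c/a) by (field; lra).
    replace ((c - b) / a) with (-b/a - -c/a) by (field; lra).
    rewrite key by auto.
    assert (0 < / RR t) by (apply Rinv_0_lt_compat; lra).
    unfold Rdiv at 1. assert (P t (-b/a) (-c/a) * / RR t <= 0) by (apply mul_np; lra).
    lra.
  -
    intros [p1 p2] _ eps Heps.
    set (A := / al t). set (B := / be t).
    assert (HA : 0 < A) by (apply Rinv_0_lt_compat; lra).
    assert (HB : 0 < B) by (apply Rinv_0_lt_compat; lra).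
    exists (eps / (3 * (A + B + 1))). split; [apply Rdiv_lt_0_compat; lra|].
    intros [q1 q2] _ Hd. unfold dist2 in Hd.
    assert (E1' : Rabs (q1 - p1) < eps / (3 * (A + B + 1))).
    { rewrite Rabs_minus_sym. eapply Rle_lt_trans; [|exact Hd].
      apply abs_le_sqrt; repeat apply Rplus_le_le_0_compat; apply pow2_ge_0. }
    assert (E2' : Rabs (q2 - p2) < eps / (3 * (A + B + 1))).
    { rewrite Rabs_minus_sym. eapply Rle_lt_trans; [|exact Hd].
      rewrite Rplus_comm. apply abs_le_sqrt; repeat apply Rplus_le_le_0_compat; apply pow2_ge_0. }
    assert (Hk : (A + B) * (eps / (3 * (A + B + 1))) <= eps / 3 * 2).
    { apply Rle_trans with ((A+B+1) * (eps / (3 * (A + B + 1)))).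
      - apply Rmult_le_compat_r; [left; apply Rdiv_lt_0_compat|]; lra.
      - replace ((A+B+1) * (eps / (3 * (A + B + 1)))) with (eps/3) by (field; lra). lra. }
    unfold gg, dist3. apply sqrt3_lt.
    + replace (1 - 1) with 0 by ring. rewrite Rabs_R0. lra.
    + replace (- ((s0 t + p1 / al t + p2 / be t) / 2) - - ((s0 t + q1 / al t + q2 / be t) / 2))
        with ((A * (q1 - p1) + B * (q2 - p2)) / 2) by (unfold A, B; field; lra).
      unfold Rdiv at 1. rewrite Rabs_mult, (Rabs_pos_eq (/2)) by lra.
      assert (H := abs_lin A B _ _ _ HA HB E1' E2'). lra.
    + replace (- ((s0 t + p1 / al t - p2 / be t) / 2) - - ((s0 t + q1 / al t - q2 / be t) / 2))
        with ((A * (q1 - p1) + B * (- (q2 - p2))) / 2) by (unfold A, B; field; lra).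
      unfold Rdiv at 1. rewrite Rabs_mult, (Rabs_pos_eq (/2)) by lra.
      rewrite <- Rabs_Ropp in E2'.
      assert (H := abs_lin A B _ _ _ HA HB E1' E2'). lra.
  -
    intros [p1 p2] Hd. unfold disk in Hd.
    set (x := (s0 t + p1 / al t + p2 / be t) / 2).
    set (y := (s0 t + p1 / al t - p2 / be t) / 2).
    assert (HK := key t x y ht).
    replace (al t * (x + y - s0 t)) with p1 in HK by (unfold x, y; field; lra).
    replace (be t * (x - y)) with p2 in HK by (unfold x, y; field; lra).
    assert (HP : P t x y <= 0).
    { replace (P t x y) with (RR t * (P t x y / RR t)) by (field; lra). nra. }
    destruct (P_region t x y ht HP) as (Hx & Hy & Hxy).
    unfold gg. fold x y. split.
    + split.
      * unfold kahler, dot, Defs.E1, E2, Lline. cbv beta iota. lra.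
      * unfold Tfun, dot, Defs.c1. cbv beta iota. apply div_le; [nra|]. unfold P in HP. nra.
    + unfold ff, fS, fD. f_equal.
      * replace (- (- x + - y) / 1) with (x + y) by field. unfold x, y. field. lra.
      * replace ((- y - - x) / 1) with (x - y) by field. unfold x, y. field. lra.
Qed.
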